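(* Let $n,d,t$ be positive integers and let $N(n,d,t)$ be as in the context. (i) Let $d$ be composite and $\tilde e_d=\max\{e: e\mid d,\ 1<e<d\}$. If $t<\tilde e_d$, then $|N(n,d,t)|=0$ if $d\mid n$, and $|N(n,d,t)|=2^{d-t-1}-\sum_{e\mid d,\,1<e<d}|N(n,e,t)|$ if $d\nmid n$. If $t\ge\tilde e_d$, then $|N(n,d,t)|=0$ if $d\mid n$, or if $d\nmid n$ and $\mathrm{rank}(A)\ne\mathrm{rank}(B)$; and $|N(n,d,t)|=2^{d-\mathrm{rank}(A)}$ if $d\nmid n$ and $\mathrm{rank}(A)=\mathrm{rank}(B)$. (ii) Let $d$ be prime. Then $|N(n,d,t)|=0$ if $d\mid n$, or if $d\nmid n$ and $t\ge d$; $|N(n,d,t)|=2^{d-t-1}$ if $d\nmid n$ and $1\le t\le d-2$; and $|N(n,d,t)|=2$ if $d\nmid n$ and $t=d-1$.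
   Context: Sequences are binary (entries in $\mathbb{Z}_2$), $\overline{x}=x\oplus1$, $x\bmod d$ is the least nonnegative residue. A length-$m$ sequence is periodic if it is the concatenation of $m/e$ copies of a length-$e$ sequence for a proper divisor $e$ of $m$, aperiodic otherwise; $A(d)$ is the set of aperiodic binary sequences $\mathbf{s}_d=(s_0,\dots,s_{d-1})$ of length $d$. For $t>0$, $N(n,d,t)=\{\mathbf{s}_d\in A(d): \overline{s_{(n-1)\bmod d}}=s_{d-1},\ s_{(n-i)\bmod d}=s_{(d-i)\bmod d}\ (2\le i\le t),\ s_{(n-t-1)\bmod d}=\overline{s_{(d-t-1)\bmod d}}\}$. $A=(a_{i,j})$ is the $(t+1)\times d$ matrix over $\mathbb{Z}_2$ whose $i$-th row ($1\le i\le t+1$) has entries $1$ exactly in columns $((n-i)\bmod d)+1$ and $((d-i)\bmod d)+1$ and $0$ elsewhere, and $\mathbf{b}=(1,0,\dots,0,1)\in\mathbb{Z}_2^{t+1}$ (first and last entries $1$); thus the defining conditions on $\mathbf{s}_d$ read $A\mathbf{x}^T=\mathbf{b}^T$ with $\mathbf{x}=(s_0,\dots,s_{d-1})$. $B=(A\mid\mathbf{b}^T)$ is the augmented matrix, and ranks are over $\mathbb{Z}_2$. *)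

(* Defs.v *)
From mathcomp Require Import all_boot all_order all_algebra.

Import GRing.Theory Num.Theory.

Definition rmod (a : int) (d : nat) : nat := `|(a %% (d%:Z))%Z|%N.

(* (m - i) mod d, computed with INTEGER subtraction *)
Definition sidx (m i d : nat) : nat := rmod (m%:Z - i%:Z)%R d.

Definition periodic (m : nat) (s : m.-tuple bool) : bool :=
  [exists e : 'I_m, (0 < e)%N && (e %| m)%N &&
     [exists u : e.-tuple bool, val s == flatten (nseq (m %/ e) (val u))]].

Definition aperiodic (m : nat) (s : m.-tuple bool) : bool := ~~ periodic m s.

Definition condN (n d t : nat) (s : d.-tuple bool) : bool :=
  let x k := nth false s k in
  [&& ~~ x (sidx n 1 d) == x d.-1,
      [forall i : 'I_t.+1, (2 <= i)%N ==> (x (sidx n i d) == x (sidx d i d))]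
    & x (sidx n t.+1 d) == ~~ x (sidx d t.+1 d)].

Definition Nset (n d t : nat) : {set d.-tuple bool} :=
  [set s : d.-tuple bool | aperiodic d s && condN n d t s].

(* The (t+1) x d matrix A over Z_2 (rows/columns 0-indexed: row r is row i=r+1) *)
Definition Amx (n d t : nat) : 'M['F_2]_(t.+1, d) :=
  \matrix_(r < t.+1, j < d)
     (nat_of_bool ((j == sidx n r.+1 d :> nat) || (j == sidx d r.+1 d :> nat)))%:R%R.

Definition bvec (t : nat) : 'cV['F_2]_(t.+1) :=
  \col_(r < t.+1) (nat_of_bool ((r == 0 :> nat) || (r == t :> nat)))%:R%R.

Definition Bmx (n d t : nat) : 'M['F_2]_(t.+1, d + 1) := row_mx (Amx n d t) (bvec t).

Definition etilde (d : nat) : nat := \max_(e < d | (1 < e)%N && (e %| d)%N) e.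

(* Main.v *)
Require Import Defs.
From mathcomp Require Import all_boot all_order all_algebra.
From mathcomp Require Import mxabelem.
From mathcomp Require Import zify ring.
Import GRing.Theory Num.Theory.

Lemma rmodE z d : (0 < d)%N -> (Posz (rmod z d) = (z %% d)%Z)%R.
Proof. move=> d0; rewrite /rmod gez0_abs // modz_ge0 //; lia. Qed.

Lemma rmod_lt z d : (0 < d)%N -> (rmod z d < d)%N.
Proof. move=> d0; have := ltz_pmod z (d:=Posz d); rewrite -rmodE //; lia. Qed.

Lemma rmod_dvd z d e : (0 < e)%N -> (e %| d)%N -> (0 < d)%N -> (rmod z d %% e)%N = rmod z e.
Proof.
move=> e0 /dvdnP[k dk] d0; apply/eqP; rewrite -eqz_nat; apply/eqP.
rewrite -modz_nat rmodE // rmodE //.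
rewrite [in RHS](divz_eq z d) dk PoszM mulrA modzMDl //.
Qed.

Lemma sidxE m i d : (0 < d)%N -> sidx m i d = ((m + (d - i %% d)) %% d)%N.
Proof.
move=> d0; rewrite /sidx /rmod.
have -> : (m%:Z - i%:Z = (- Posz (i %/ d).+1) * d%:Z + Posz (m + (d - i %% d)))%R.
  have hi := divn_eq i d. have hl : (i %% d < d)%N by rewrite ltn_mod.
  lia.
by rewrite modzMDl modz_nat.
Qed.

Lemma sidx_lt m i d : (0 < d)%N -> (sidx m i d < d)%N.
Proof. exact: rmod_lt. Qed.

Lemma sidx_self i d : (0 < i <= d)%N -> sidx d i d = (d - i)%N.
Proof.
move=> /andP[i0 id]; have d0 : (0 < d)%N by lia.
rewrite sidxE // modnDl.
case: (ltnP i d) => h; first by rewrite (modn_small h) modn_small //; lia.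
have -> : i = d by lia. by rewrite modnn subn0 modnn subnn.
Qed.

Lemma sidx_inj m i j d : (0 < i <= d)%N -> (0 < j <= d)%N -> sidx m i d = sidx m j d -> i = j.
Proof.
move=> hi hj; have d0 : (0 < d)%N by lia.
move=> /(congr1 Posz); rewrite /sidx !rmodE // => /eqP.
rewrite eqz_mod_dvd.
have -> : ((m%:Z - i%:Z) - (m%:Z - j%:Z) = j%:Z - i%:Z)%R by lia.
rewrite -topredE /= /dvdz => h.
case: (ltngtP i j) => // hij; exfalso.
- have := dvdn_leq _ h. lia.
- have := dvdn_leq _ h. lia.
Qed.

Lemma sidx_dvd n i d : (0 < d)%N -> (d %| n)%N -> sidx n i d = sidx d i d.
Proof.
move=> d0 dn; rewrite !sidxE // modnDl -modnDml (eqP dn) //.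
Qed.

Lemma cond_dvd n d t (s : d.-tuple bool) : (0 < d)%N -> (d %| n)%N -> condN n d t s = false.
Proof.
move=> d0 dn; rewrite /condN sidx_dvd // sidx_self; last by lia.
have -> : (d - 1 = d.-1)%N by lia.
by case: (nth false s d.-1).
Qed.

Lemma cond_parity n e t (u : e.-tuple bool) : (0 < e)%N -> (e <= t)%N -> condN n e t u = false.
Proof.
move=> e0 et; apply/negP => /and3P[c1 /forallP c2 _].
set Y := fun k => nth false u k.
pose hA (i : 'I_e) : 'I_e := Ordinal (@sidx_lt n i.+1 e e0).
pose hB (i : 'I_e) : 'I_e := Ordinal (@sidx_lt e i.+1 e e0).
have iA : injective hA.
  move=> i j /(congr1 val) /= /sidx_inj h; apply: ord_inj; have hi := ltn_ord i; have hj := ltn_ord j; have := h ltac:(lia) ltac:(lia); lia.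
have iB : injective hB.
  move=> i j /(congr1 val) /= /sidx_inj h; apply: ord_inj; have hi := ltn_ord i; have hj := ltn_ord j; have := h ltac:(lia) ltac:(lia); lia.
have H0 : \big[addb/false]_(i < e) (Y (hA i) (+) Y (hB i)) = false.
  rewrite big_split /=.
  have eA : \big[addb/false]_(i < e) Y (hA i) = \big[addb/false]_(i < e) Y i
    := esym (reindex_inj iA (P:=xpredT) (F:=fun i : 'I_e => Y i)).
  have eB : \big[addb/false]_(i < e) Y (hB i) = \big[addb/false]_(i < e) Y i
    := esym (reindex_inj iB (P:=xpredT) (F:=fun i : 'I_e => Y i)).
  by rewrite eA eB addbb.
pose i0 : 'I_e := Ordinal e0.
move: H0; rewrite (bigD1 i0) //= big1 ?addbF.
  rewrite /hA /hB /= sidx_self; last by lia.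
  move: c1; rewrite /Y subn1 /=. by case: (nth false u (sidx n 1 e)); case: (nth false u e.-1).
move=> i ni0.
have hi : (0 < i)%N by case: i ni0 => [[|k]] //= ?; rewrite /i0 /eq_op /=.
have := c2 (inord i.+1). rewrite inordK /=; last by have := ltn_ord i; lia.
have -> : (1 < i.+1)%N by lia. move=> /= /eqP. rewrite /hA /hB /Y /= => ->. by rewrite addbb.
Qed.

Definition mkt d (f : nat -> bool) : d.-tuple bool := [tuple f i | i < d].

Lemma nth_mkt d f k : (k < d)%N -> nth false (mkt d f) k = f k.
Proof. move=> kd; exact: (nth_mktuple _ _ (Ordinal kd)). Qed.

Lemma tuple_ext d (s1 s2 : d.-tuple bool) :
  (forall k, (k < d)%N -> nth false s1 k = nth false s2 k) -> s1 = s2.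
Proof. move=> h; apply: eq_from_tnth => i; rewrite !(tnth_nth false); exact: h. Qed.

Definition sysb d r a (c : nat -> bool) (s : d.-tuple bool) :=
  [forall k : 'I_d, (a <= k)%N ==> (nth false s k == nth false s ((k + r) %% d) (+) c k)].

Lemma card_zero_tail d a : (a <= d)%N ->
  #|[set z : d.-tuple bool | [forall k : 'I_d, (a <= k)%N ==> ~~ nth false z k]]| = (2 ^ a)%N.
Proof.
move=> ad.
pose G (w : a.-tuple bool) : d.-tuple bool := mkt d (nth false w).
have iG : injective G.
  move=> w1 w2 h; apply: tuple_ext => k ka.
  have := congr1 (fun z : d.-tuple bool => nth false z k) h; rewrite /G !nth_mkt //; lia.
have -> : [set z : d.-tuple bool | [forall k : 'I_d, (a <= k)%N ==> ~~ nth false z k]] = G @: setT.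
  apply/setP => z; rewrite inE; apply/idP/idP.
  - move=> /forallP hz; apply/imsetP; exists (mkt a (nth false z)) => //.
    apply: tuple_ext => k kd; rewrite /G nth_mkt //.
    case: (ltnP k a) => ka; first by rewrite nth_mkt.
    rewrite [in RHS]nth_default ?size_tuple //. have := hz (Ordinal kd); rewrite /= ka /=.
    by case: (nth false z k).
  - move=> /imsetP[w _ ->]; apply/forallP => k; apply/implyP => ka.
    by rewrite /G nth_mkt // nth_default // size_tuple.
by rewrite card_imset // cardsT card_tuple card_bool.
Qed.

Definition Fmap d r a (c : nat -> bool) (s : d.-tuple bool) : d.-tuple bool :=
  mkt d (fun k => if (a <= k)%N then nth false s k (+) nth false s ((k + r) %% d) (+) c k
                  else nth false s k).

Lemma forest_count d r a (c : nat -> bool) : (0 < d)%N -> (a <= d)%N ->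
  (forall k, (k < d)%N -> exists m, ((k + m * r) %% d < a)%N) ->
  #|[set s : d.-tuple bool | sysb d r a c s]| = (2 ^ a)%N.
Proof.
move=> d0 ad H.
pose F := Fmap d r a c.
have iF : injective F.
  move=> s1 s2 h.
  have hk : forall k, (k < d)%N -> nth false (F s1) k = nth false (F s2) k by move=> k _; rewrite h.
  have main : forall m k, (k < d)%N -> ((k + m * r) %% d < a)%N -> nth false s1 k = nth false s2 k.
    elim=> [|m IH] k kd.
      rewrite mul0n addn0 modn_small // => ka.
      by have := hk k kd; rewrite /F /Fmap !nth_mkt // leqNgt ka.
    move=> km.
    case: (ltnP k a) => ka.
      by have := hk k kd; rewrite /F /Fmap !nth_mkt // leqNgt ka.
    have := hk k kd; rewrite /F /Fmap !nth_mkt // ka.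
    have -> : nth false s1 ((k + r) %% d) = nth false s2 ((k + r) %% d).
      apply: IH; first by rewrite ltn_mod.
      by rewrite modnDml -addnA -mulSn.
    by move/addIb/addIb.
  apply: tuple_ext => k kd; have [m hm] := H k kd; exact: main hm.
have -> : [set s : d.-tuple bool | sysb d r a c s] =
          F @^-1: [set z : d.-tuple bool | [forall k : 'I_d, (a <= k)%N ==> ~~ nth false z k]].
  apply/setP => s; rewrite !inE /sysb; apply: eq_forallb => k.
  case: (leqP a k) => h; rewrite /F /Fmap nth_mkt // ?h /=.
  by case: (nth false s k); case: (nth false s ((k + r) %% d)); case: (c k).
by rewrite card_preimset // card_zero_tail.
Qed.

Lemma orbit_hits d r a k : (0 < d)%N -> (0 < r)%N -> (gcdn r d <= a)%N -> (k < d)%N ->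
  exists m, ((k + m * r) %% d < a)%N.
Proof.
move=> d0 r0 ga kd.
set g := gcdn r d.
have g0 : (0 < g)%N by rewrite gcdn_gt0 r0.
have gd : (g %| d)%N by apply: dvdn_gcdr.
have [km kn hb _] := egcdnP d r0.
have e1 := divn_eq k g.
set q := (k %/ g)%N in e1 *.
have e2 : d = (d %/ g * g)%N by rewrite divnK.
have L0 : (0 < d %/ g)%N by rewrite divn_gt0 // dvdn_leq.
set L := (d %/ g)%N in e2 L0.
have [L' eL] : exists L', L = L'.+1 by exists L.-1; lia.
exists (km * q * L')%N.
have -> : (k + km * q * L' * r = k %% g + (q + q * L' * kn) * d)%N.
  have -> : (km * q * L' * r = q * L' * (km * r))%N by ring.
  rewrite hb. rewrite {1}e1. rewrite {1 3}e2 eL. ring.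
rewrite addnC modnMDl modn_small; first by have := ltn_mod k g; lia.
have := ltn_mod k g; have := dvdn_leq d0 gd; lia.
Qed.

Lemma sidx_k n i d : (0 < i <= d)%N -> sidx n i d = ((d - i + n) %% d)%N.
Proof.
move=> /andP[i0 id]; have d0 : (0 < d)%N by lia.
rewrite sidxE //; case: (ltnP i d) => h.
  by rewrite (modn_small h) addnC.
have -> : i = d by lia. by rewrite modnn subn0 subnn add0n modnDr.
Qed.

Definition cc d t k := (k == d.-1) || (k == d - t.+1)%N.

Lemma condN_sys n d t (s : d.-tuple bool) : (0 < t)%N -> (t < d)%N ->
  condN n d t s = sysb d n (d - t.+1) (cc d t) s.
Proof.
move=> t0 td; rewrite /condN /sysb.
set x := nth false s.
have E1 : sidx n 1 d = ((d.-1 + n) %% d)%N by rewrite sidx_k; [congr (_ %% _)%N; lia | lia].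
have E3 : sidx n t.+1 d = ((d - t.+1 + n) %% d)%N by rewrite sidx_k; lia.
have E3' : sidx d t.+1 d = (d - t.+1)%N by rewrite sidx_self; lia.
rewrite E1 E3 E3'.
apply/idP/idP.
- move=> /and3P[c1 /forallP c2 c3]; apply/forallP => k; apply/implyP => hk.
  have kd := ltn_ord k.
  rewrite /cc.
  case: (eqVneq (k : nat) d.-1) => [ek|nk1].
    rewrite ek /=. move: c1. by case: (x d.-1); case: (x ((d.-1 + n) %% d)).
  case: (eqVneq (k : nat) (d - t.+1)%N) => [ek|nk2].
    rewrite ek /=. move: c3. by case: (x (d - t.+1)%N); case: (x ((d - t.+1 + n) %% d)).
  rewrite /=. have := c2 (inord (d - k)). rewrite inordK; last by lia.
  have -> : (1 < d - k)%N by lia. rewrite sidx_k; last by lia. rewrite sidx_self; last by lia.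
  have -> : (d - (d - k) = k)%N by lia. rewrite addbF => /eqP ->. by rewrite eqxx.
- move=> /forallP h; apply/and3P; split.
  + have d1 : (d.-1 < d)%N by lia.
    have := h (Ordinal d1); rewrite /= /cc eqxx /=. have -> : (d - t.+1 <= d.-1)%N by lia. 
    by case: (x d.-1); case: (x ((d.-1 + n) %% d)).
  + apply/forallP => i; apply/implyP => i2. have ht := ltn_ord i.
    have dd : (d - i < d)%N by lia.
    have := h (Ordinal dd); rewrite /= /cc.
    have -> : (d - t.+1 <= d - i)%N by lia.
    have -> : (d - i == d.-1) = false by apply/eqP; lia.
    have -> : (d - i == d - t.+1) = false by apply/eqP; lia.
    rewrite /= addbF sidx_k; last by lia. rewrite sidx_self; last by lia.
    by move=> /eqP ->.
  + have dd : (d - t.+1 < d)%N by lia.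
    have := h (Ordinal dd); rewrite /= /cc leqnn eqxx orbT /=.
    by case: (x (d - t.+1)%N); case: (x ((d - t.+1 + n) %% d)).
Qed.

Definition Sol n d t := [set s : d.-tuple bool | condN n d t s].

Lemma sol_forest n d t : (0 < n)%N -> (0 < t)%N -> (t.+1 + gcdn n d <= d)%N ->
  #|Sol n d t| = (2 ^ (d - t - 1))%N.
Proof.
move=> n0 t0 h.
have g0 : (0 < gcdn n d)%N by rewrite gcdn_gt0 n0.
have d0 : (0 < d)%N by lia.
have -> : Sol n d t = [set s : d.-tuple bool | sysb d n (d - t.+1) (cc d t) s].
  by apply/setP => s; rewrite !inE condN_sys //; lia.
rewrite forest_count //; first by congr (_ ^ _)%N; lia.
  lia.
move=> k kd; apply: orbit_hits => //; lia.
Qed.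

Lemma sol_full n d t : (0 < n)%N -> (1 < d)%N -> t = d.-1 -> gcdn n d = 1%N ->
  #|Sol n d t| = 2%N.
Proof.
move=> n0 d1 et g1.
have d0 : (0 < d)%N by lia.
have t0 : (0 < t)%N by lia.
have -> : Sol n d t = [set s : d.-tuple bool | sysb d n 1 (cc d t) s].
  apply/setP => s; rewrite !inE condN_sys; try lia.
  have -> : (d - t.+1 = 0)%N by lia.
  apply/idP/idP.
    move=> /forallP h; apply/forallP => k; apply/implyP => _; exact: (implyP (h k)).
  move=> /forallP h; apply/forallP => k; apply/implyP => _.
  case: (posnP k) => [k0|kp]; last exact: (implyP (h k)).
  set x := nth false s.
  pose hA (i : 'I_d) : 'I_d := Ordinal (@ltn_pmod (i + n) d d0).
  have iA : injective hA.
    move=> i j /(congr1 val) /= /eqP; rewrite eqn_modDr !modn_small // => /eqP; exact: ord_inj.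
  have H0 : \big[addb/false]_(i < d) (x i (+) x (hA i)) = false.
    rewrite big_split /=.
    have eA : \big[addb/false]_(i < d) x (hA i) = \big[addb/false]_(i < d) x i
      := esym (reindex_inj iA (P:=xpredT) (F:=fun i : 'I_d => x i)).
    by rewrite eA addbb.
  pose i0 : 'I_d := Ordinal d0.
  have d1' : (d.-1 < d)%N by lia.
  pose i1 : 'I_d := Ordinal d1'.
  move: H0; rewrite (bigD1 i0) //= (bigD1 i1) /=; last by rewrite /i1 /i0 /eq_op /=; lia.
  rewrite big1.
    have := h i1; rewrite /= /cc eqxx /=. have -> : (0 < d.-1)%N by lia. rewrite -/x => /= /eqP ->.
    rewrite k0. have -> : (0 == d.-1) = false by apply/eqP; lia.
    have -> : (0 == d - t.+1) = true by apply/eqP; lia.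
    by case: (x 0); case: (x ((0 + n) %% d)); case: (x ((d.-1 + n) %% d)).
  move=> i /andP[ni0 ni1].
  have ip : (0 < i)%N by case: i ni0 ni1 => [[|k']] //= ?; rewrite /i0 /eq_op /=.
  have := h i; rewrite /= ip -/x /= => /eqP ->.
  rewrite /cc. have -> : (i == d.-1 :> nat) = false by apply/negbTE; move: ni1; rewrite /i1 /eq_op /=.
  have -> : (i == d - t.+1 :> nat) = false by apply/eqP; lia.
  by rewrite /hA /= addbF addbb.
rewrite forest_count //; move=> k kd; apply: orbit_hits => //; lia.
Qed.

Set Implicit Arguments. Unset Strict Implicit.

Definition Pf (Y : nat -> bool) f := forall j, Y (j + f) = Y j.

Lemma Pf_mul Y f k : Pf Y f -> Pf Y (k * f).
Proof. move=> h; elim: k => [|k IH] j; first by rewrite mul0n addn0. by rewrite mulSn addnA IH h. Qed.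

Lemma Pf_sub Y a b : Pf Y a -> Pf Y (a + b) -> Pf Y b.
Proof. move=> ha hab j; by rewrite -ha -addnA (addnC b) hab. Qed.

Lemma Pf_mod Y e j : Pf Y e -> Y j = Y (j %% e).
Proof. move=> h; rewrite {1}(divn_eq j e) addnC; exact: Pf_mul. Qed.

Lemma Pf_gcd Y f g : (0 < f)%N -> Pf Y f -> Pf Y g -> Pf Y (gcdn f g).
Proof.
move=> f0 hf hg; have [km kn hb _] := egcdnP g f0.
apply: (@Pf_sub Y (kn * g)); first exact: Pf_mul.
rewrite -hb; exact: Pf_mul.
Qed.

Definition Xs d (s : d.-tuple bool) j := nth false s (j %% d).
Arguments Xs {d}.

Definition perb d (s : d.-tuple bool) f :=
  [forall j : 'I_d, nth false s ((j + f) %% d) == nth false s j].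
Arguments perb {d}.

Lemma perP d (s : d.-tuple bool) f : (0 < d)%N -> reflect (Pf (Xs s) f) (perb s f).
Proof.
move=> d0; apply: (iffP forallP).
  move=> h j; rewrite /Xs -modnDml.
  have := h (Ordinal (ltn_pmod j d0)); by move=> /= /eqP ->.
move=> h j; apply/eqP; have := h j; rewrite /Xs (modn_small (ltn_ord j)) //.
Qed.

Lemma Pf_len d (s : d.-tuple bool) : Pf (Xs s) d.
Proof. by move=> j; rewrite /Xs modnDr. Qed.

Definition mp d (s : d.-tuple bool) := find (fun f => (0 < f)%N && perb s f) (iota 0 d.+1).
Arguments mp {d}.

Lemma mp_spec d (s : d.-tuple bool) : (0 < d)%N -> [/\ 0 < mp s, mp s <= d & perb s (mp s)]%N.
Proof.
move=> d0.
have hs : has (fun f => (0 < f)%N && perb s f) (iota 0 d.+1).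
  apply/hasP; exists d; first by rewrite mem_iota /=; lia.
  by rewrite d0; apply/perP => //; exact: Pf_len.
have hl := hs; rewrite has_find size_iota in hl.
have := nth_find 0%N hs; rewrite nth_iota // add0n => /andP[h1 h2]; split => //; rewrite /mp; lia.
Qed.

Lemma mp_min d (s : d.-tuple bool) f : (0 < d)%N -> (0 < f)%N -> (f < mp s)%N -> ~~ perb s f.
Proof.
move=> d0 f0 fm; have [_ md _] := mp_spec s d0.
have := before_find 0%N fm; rewrite nth_iota; last by lia.
rewrite add0n f0 /= => ->; done.
Qed.

Lemma mp_le d (s : d.-tuple bool) f : (0 < d)%N -> (0 < f)%N -> Pf (Xs s) f -> (mp s <= f)%N.
Proof.
move=> d0 f0 hf; rewrite leqNgt; apply/negP => fm.
by have := mp_min d0 f0 fm; rewrite (introT (perP _ _ d0) hf).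
Qed.

Lemma mp_dvd d (s : d.-tuple bool) f : (0 < d)%N -> (0 < f)%N -> Pf (Xs s) f -> (mp s %| f)%N.
Proof.
move=> d0 f0 hf; have [m0 md /(perP _ _ d0) hm] := mp_spec s d0.
have hg := Pf_gcd m0 hm hf.
have g0 : (0 < gcdn (mp s) f)%N by rewrite gcdn_gt0 m0.
have := mp_le d0 g0 hg; have := dvdn_leq m0 (dvdn_gcdl (mp s) f).
move=> h1 h2; have -> : mp s = gcdn (mp s) f by apply/eqP; rewrite eqn_leq h1 h2.
exact: dvdn_gcdr.
Qed.


Lemma size_flat (u : seq bool) k : size (flatten (nseq k u)) = (k * size u)%N.
Proof. elim: k => [|k IH] //=; by rewrite size_cat IH mulSn. Qed.

Lemma nth_flat (u : seq bool) k j : (0 < size u)%N -> (j < k * size u)%N ->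
  nth false (flatten (nseq k u)) j = nth false u (j %% size u).
Proof.
move=> u0; elim: k j => [|k IH] j /=; first by rewrite mul0n.
move=> hj; rewrite nth_cat; case: ltnP => h; first by rewrite modn_small.
rewrite IH; last by rewrite mulSn in hj; lia.
by rewrite -{2}(subnK h) modnDr.
Qed.

Lemma periodicP d (s : d.-tuple bool) : (0 < d)%N ->
  periodic d s = [exists e : 'I_d, (0 < e)%N && (e %| d)%N && perb s e].
Proof.
move=> d0; apply/existsP/existsP => -[e /andP[/andP[e0 ed] h]]; exists e; rewrite e0 ed /=.
- move: h => /existsP[u /eqP hu]; apply/(perP _ _ d0) => j.
  have he : Xs s =1 (fun j => nth false u (j %% e)).
    move=> k; rewrite /Xs hu nth_flat ?size_tuple //.
      by rewrite modn_dvdm.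
    by rewrite divnK // ltn_pmod.
  by rewrite !he -modnDmr modnn addn0.
- apply/existsP; exists (mkt e (nth false s)); apply/eqP.
  apply: (@eq_from_nth _ false); first by rewrite size_flat !size_tuple divnK.
  move=> k; rewrite size_tuple => kd.
  rewrite nth_flat ?size_tuple //; last by rewrite divnK.
  rewrite nth_mkt ?ltn_pmod //.
  have hke : (k %% e < d)%N by have := ltn_pmod k e0; have := dvdn_leq d0 ed; lia.
  have := Pf_mod k (perP _ _ d0 h); rewrite /Xs (modn_small kd) (modn_small hke) //.
Qed.

Definition rep d e (u : e.-tuple bool) : d.-tuple bool := mkt d (fun k => nth false u (k %% e)).

Lemma Xs_rep d e (u : e.-tuple bool) : (0 < d)%N -> (0 < e)%N -> (e %| d)%N ->
  Xs (rep d u) =1 Xs u.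
Proof. by move=> d0 e0 ed j; rewrite /Xs /rep nth_mkt ?ltn_pmod // modn_dvdm. Qed.

Lemma rmod_shift d e i : (0 < e)%N -> (e %| d)%N -> sidx d i e = sidx e i e.
Proof.
move=> e0 /dvdnP[k dk]; rewrite /sidx; apply/eqP; rewrite -eqz_nat; apply/eqP.
rewrite !rmodE //. rewrite dk.
have -> : ((k * e)%N%:Z - i%:Z = (k%:Z - 1) * e%:Z + (e%:Z - i%:Z))%R by lia.
by rewrite modzMDl.
Qed.

Lemma condN_rep n d e t (u : e.-tuple bool) : (0 < d)%N -> (0 < e)%N -> (e %| d)%N ->
  condN n d t (rep d u) = condN n e t u.
Proof.
move=> d0 e0 ed.
have nr j : (j < d)%N -> nth false (rep d u) j = nth false u (j %% e).
  by move=> jd; rewrite /rep nth_mkt.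
have A m i : nth false (rep d u) (sidx m i d) = nth false u (sidx m i e).
  by rewrite nr ?sidx_lt // /sidx rmod_dvd.
have C : nth false (rep d u) d.-1 = nth false u e.-1.
  have -> : d.-1 = sidx d 1 d by rewrite sidx_self; lia.
  have -> : e.-1 = sidx e 1 e by rewrite sidx_self; lia.
  by rewrite A rmod_shift.
rewrite /condN C !A !(@rmod_shift d e _ e0 ed).
congr (_ && (_ && _)).
apply: eq_forallb => i; by rewrite !A !(@rmod_shift d e _ e0 ed).
Qed.


Lemma Pf_eq Y1 Y2 f : Y1 =1 Y2 -> Pf Y1 f -> Pf Y2 f.
Proof. by move=> h h1 j; rewrite -!h. Qed.

Lemma rep_of d e (s : d.-tuple bool) : (0 < d)%N -> (0 < e)%N -> (e %| d)%N -> perb s e ->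
  s = rep d (mkt e (nth false s)).
Proof.
move=> d0 e0 ed /(perP _ _ d0) h; apply: tuple_ext => k kd.
have hke : (k %% e < d)%N by have := ltn_pmod k e0; have := dvdn_leq d0 ed; lia.
rewrite /rep nth_mkt // nth_mkt ?ltn_pmod //.
have := Pf_mod k h; by rewrite /Xs (modn_small kd) (modn_small hke).
Qed.

Lemma rep_inj d e : (0 < e)%N -> (e <= d)%N -> injective (@rep d e).
Proof.
move=> e0 ed u1 u2 h; apply: tuple_ext => k ke.
have := congr1 (fun z : d.-tuple bool => nth false z k) h.
rewrite /rep !nth_mkt ?modn_small //; lia.
Qed.

Lemma level_set n d t e : (0 < d)%N -> (0 < t)%N ->
  #|[set s : d.-tuple bool | condN n d t s && (mp s == e)]| =
  if (1 < e)%N && (e %| d)%N then #|Nset n e t| else 0%N.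
Proof.
move=> d0 t0.
have Hs : forall s : d.-tuple bool, mp s = e ->
   [/\ (0 < e)%N, (e %| d)%N, s = rep d (mkt e (nth false s)) & forall g, (0 < g)%N -> (g < e)%N -> ~~ perb s g].
  move=> s es; have [m0 md mp'] := mp_spec s d0.
  have ed : (mp s %| d)%N by apply: mp_dvd => //; exact: Pf_len.
  rewrite -es; split => //; first exact: rep_of.
  move=> g g0 ge; exact: mp_min.
case: ifP => [/andP[e1 ed]|ne].
- have e0 : (0 < e)%N by lia.
  suff -> : [set s : d.-tuple bool | condN n d t s && (mp s == e)] = (@rep d e) @: Nset n e t.
    by rewrite (card_imset _ (rep_inj e0 (dvdn_leq d0 ed))).
  apply/setP => s; rewrite inE; apply/idP/imsetP.
  + move=> /andP[cs /eqP es]; have [_ _ hs hm] := Hs s es.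
    exists (mkt e (nth false s)) => //.
    rewrite inE; apply/andP; split; last by rewrite -(@condN_rep n d e t) // -hs.
    rewrite /aperiodic periodicP //; apply/negP => /existsP[g /andP[/andP[g0 ge] pg]].
    have /negP := hm g g0 (ltn_ord g); apply; apply/(perP _ _ d0).
    rewrite hs; apply: Pf_eq (fun j => esym (Xs_rep _ d0 e0 ed j)) _.
    exact/(perP _ _ e0).
  + move=> [u]; rewrite inE => /andP[ap cu] ->.
    rewrite condN_rep // cu /=.
    have X1 := Xs_rep u d0 e0 ed.
    have hle : (mp (rep d u) <= e)%N.
      apply: mp_le => //; apply: Pf_eq (fun j => esym (X1 j)) _; exact: Pf_len.
    have [m0 _ /(perP _ _ d0) pm] := mp_spec (rep d u) d0.
    rewrite eqn_leq hle /= leqNgt; apply/negP => lt.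
    move: ap; rewrite /aperiodic periodicP // => /negP; apply; apply/existsP.
    have pu : Pf (Xs u) (mp (rep d u)) by apply: Pf_eq X1 pm.
    have pg := Pf_gcd m0 pu (Pf_len u).
    have g0 : (0 < gcdn (mp (rep d u)) e)%N by rewrite gcdn_gt0 m0.
    have gl : (gcdn (mp (rep d u)) e < e)%N.
      have := dvdn_leq m0 (dvdn_gcdl (mp (rep d u)) e); lia.
    exists (Ordinal gl); rewrite /= g0 dvdn_gcdr /=; exact/(perP _ _ e0).
- apply/eqP; rewrite cards_eq0; apply/eqP/setP => s; rewrite !inE.
  apply/negP => /andP[cs /eqP es]; have [e0 ed hs _] := Hs s es.
  have e1 : e = 1%N by move: ne; rewrite ed andbT; lia.
  move: cs; rewrite hs condN_rep // cond_parity //; lia.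
Qed.

Lemma sol_decomp n d t : (1 < d)%N -> (0 < t)%N ->
  #|Sol n d t| = (#|Nset n d t| + \sum_(e < d | (1 < e)%N && (e %| d)%N) #|Nset n e t|)%N.
Proof.
move=> d1 t0; have d0 : (0 < d)%N by lia.
rewrite -sum1_card (partition_big (fun s => (inord (mp s) : 'I_d.+1)) xpredT) //=.
rewrite (eq_bigr (fun j : 'I_d.+1 => if (1 < j)%N && (j %| d)%N then #|Nset n j t| else 0%N)).
  rewrite big_ord_recr /= d1 dvdnn /= addnC; congr (_ + _)%N.
  rewrite [RHS]big_mkcond; by apply: eq_bigr.
move=> j _; rewrite -level_set // sum1dep_card; apply: eq_card => s; rewrite !inE.
have [_ md _] := mp_spec s d0.
by rewrite -val_eqE /= inordK.
Qed.

Section LAsec.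

Local Open Scope ring_scope.

Lemma count_affine d m (At : 'M['F_2]_(d, m)) (bt : 'rV['F_2]_m) :
  #|[set v : 'rV['F_2]_d | v *m At == bt]| =
  if (bt <= At)%MS then (2 ^ (d - \rank At))%N else 0%N.
Proof.
case: ifP => hb.
- have [v0 hv0] := submxP hb.
  have -> : [set v : 'rV['F_2]_d | v *m At == bt] = [set w + v0 | w in rowg (kermx At)].
    apply/setP => v; rewrite inE; apply/eqP/imsetP.
    + move=> hv; exists (v - v0); last by rewrite subrK.
      by rewrite inE sub_kermx mulmxBl hv hv0 subrr.
    + move=> [w]; rewrite inE sub_kermx => /eqP hw ->.
      by rewrite mulmxDl hw add0r hv0.
  rewrite card_imset; last exact: addIr.
  by rewrite card_rowg mxrank_ker card_Fp.
- apply/eqP; rewrite cards_eq0; apply/eqP/setP => v; rewrite !inE.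
  apply/negP => /eqP hv; move: hb; by rewrite -hv submxMl.
Qed.

Lemma rank_cond n d t :
  (\rank (Amx n d t) == \rank (Bmx n d t)) = ((bvec t)^T <= (Amx n d t)^T)%MS.
Proof.
rewrite /Bmx -[\rank (row_mx _ _)]mxrank_tr tr_row_mx -[\rank (Amx _ _ _)]mxrank_tr -addsmxE.
rewrite (mxrank_leqif_sup (addsmxSl _ _)).2 addsmx_sub submx_refl //.
Qed.

End LAsec.


Lemma fadd (p q : bool) : (p%:R + q%:R : 'F_2)%R = (p (+) q)%:R%R.
Proof. case: p; case: q => /=; apply: val_inj => //=. Qed.
Lemma fmul (p q : bool) : (p%:R * q%:R : 'F_2)%R = (p && q)%:R%R.
Proof. case: p; case: q => /=; apply: val_inj => //=. Qed.
Lemma feq (p q : bool) : ((p%:R : 'F_2) == q%:R)%R = (p == q).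
Proof. case: p; case: q => //=. Qed.
Lemma fsurj (x : 'F_2) : x = (x == 1%R)%:R%R.
Proof. by case: x => [[|[|k]] //=] ?; apply: val_inj. Qed.

Lemma sidx_neq n d i : (0 < d)%N -> ~~ (d %| n)%N -> sidx n i d != sidx d i d.
Proof.
move=> d0 nd; rewrite !sidxE //; apply/negP => /eqP h.
have : (n + (d - i %% d) == 0 + (d - i %% d) %[mod d])%N by rewrite h add0n modnDl.
by rewrite eqn_modDr mod0n; move: nd; rewrite /dvdn => /negbTE ->.
Qed.

Lemma condN_rows n d t (s : d.-tuple bool) : (0 < d)%N -> (0 < t)%N ->
  condN n d t s = [forall r : 'I_t.+1,
    nth false s (sidx n r.+1 d) (+) nth false s (sidx d r.+1 d) == ((r == 0 :> nat) || (r == t :> nat))].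
Proof.
move=> d0 t0; rewrite /condN; set x := nth false s.
have E1 : sidx d 1 d = d.-1 by rewrite sidx_self; lia.
apply/idP/forallP.
- move=> /and3P[c1 /forallP c2 c3] r.
  case: (posnP r) => [r0|rp].
    rewrite r0 /= E1.
    move: c1; by case: (x (sidx n 1 d)); case: (x d.-1).
  case: (eqVneq (r : nat) t) => [rt|rnt].
    rewrite rt /=.
    move: c3; by case: (x (sidx n t.+1 d)); case: (x (sidx d t.+1 d)).
  have := c2 (inord r.+1); rewrite inordK; last by have := ltn_ord r; lia.
  have -> : (1 < r.+1)%N by lia. rewrite -/x => /= /eqP ->.
  by rewrite addbb.
- move=> h; apply/and3P; split.
  + have := h ord0; rewrite /= E1 -/x.
    by case: (x (sidx n 1 d)); case: (x d.-1).
  + apply/forallP => i; apply/implyP => i2.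
    have il : (i.-1 < t.+1)%N by have := ltn_ord i; lia.
    have := h (Ordinal il); rewrite /=.
    have -> : (i.-1 == 0 :> nat) = false by lia.
    have -> : (i.-1 == t :> nat) = false by have := ltn_ord i; lia.
    have -> : i.-1.+1 = i by lia.
    by case: (x (sidx n i d)); case: (x (sidx d i d)).
  + have := h ord_max; rewrite /= eqxx orbT.
    by case: (x (sidx n t.+1 d)); case: (x (sidx d t.+1 d)).
Qed.

Definition vec d (s : d.-tuple bool) : 'rV['F_2]_d := \row_(j < d) (nth false s j)%:R%R.

Lemma condN_mx n d t (s : d.-tuple bool) : (0 < d)%N -> (0 < t)%N -> ~~ (d %| n)%N ->
  condN n d t s = (vec s *m (Amx n d t)^T == (bvec t)^T)%R.
Proof.
move=> d0 t0 nd; rewrite condN_rows //; set x := nth false s.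
have E r : ((vec s *m (Amx n d t)^T) 0 r = (x (sidx n r.+1 d) (+) x (sidx d r.+1 d))%:R)%R.
  rewrite !mxE.
  under eq_bigr do rewrite !mxE fmul.
  pose ia : 'I_d := Ordinal (@sidx_lt n r.+1 d d0).
  pose ib : 'I_d := Ordinal (@sidx_lt d r.+1 d d0).
  have nab : ia != ib by rewrite -val_eqE /=; exact: sidx_neq.
  rewrite (bigD1 ia) //= (bigD1 ib) /=; last by rewrite eq_sym.
  rewrite big1.
    rewrite eqxx /= andbT addr0 fadd. rewrite eqxx orbT andbT.
    by [].
  move=> j /andP[ja jb].
  rewrite -!val_eqE /= in ja jb. by rewrite (negbTE ja) (negbTE jb) andbF.
apply/forallP/eqP.
- move=> h; apply/rowP => r; rewrite E !mxE; have := h r => /eqP -> //.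
- move=> h r; have := congr1 (fun M : 'rV['F_2]_t.+1 => M 0%R r) h; rewrite E !mxE => /eqP; by rewrite feq.
Qed.


Lemma vec_inj d : injective (@vec d).
Proof.
move=> s1 s2 h; apply: tuple_ext => k kd.
have := congr1 (fun M : 'rV['F_2]_d => M 0%R (Ordinal kd)) h; rewrite !mxE /= => /eqP.
by rewrite feq => /eqP.
Qed.

Lemma sol_rank n d t : (0 < d)%N -> (0 < t)%N -> ~~ (d %| n)%N ->
  #|Sol n d t| = if \rank (Amx n d t) == \rank (Bmx n d t) then (2 ^ (d - \rank (Amx n d t)))%N else 0%N.
Proof.
case: d => // d _ t0 nd.
rewrite -(card_imset _ (@vec_inj d.+1)).
have -> : [set vec x | x in Sol n d.+1 t] = [set v : 'rV['F_2]_d.+1 | (v *m (Amx n d.+1 t)^T == (bvec t)^T)%R].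
  apply/setP => v; rewrite inE; apply/imsetP/idP.
  - by move=> [s]; rewrite inE condN_mx // => h ->.
  - move=> h; have ev : v = vec (mkt d.+1 (fun k => v 0%R (inord k) == 1%R)).
      apply/rowP => j; rewrite mxE nth_mkt // inord_val -fsurj //.
    exists (mkt d.+1 (fun k => v 0%R (inord k) == 1%R)) => //.
    by rewrite inE condN_mx // -ev.
by rewrite count_affine -rank_cond mxrank_tr.
Qed.


Lemma nset0 n d t : (forall s : d.-tuple bool, condN n d t s = false) -> #|Nset n d t| = 0%N.
Proof.
move=> h; apply/eqP; rewrite cards_eq0; apply/eqP/setP => s; by rewrite !inE h andbF.
Qed.

Lemma half_div e d : (0 < d)%N -> (e %| d)%N -> (e < d)%N -> (2 * e <= d)%N.
Proof.
move=> d0 /dvdnP[k dk] ed; subst d.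
have : (k != 0)%N by apply/eqP => k0; move: d0; rewrite k0.
have : (k != 1)%N by apply/eqP => k1; move: ed; rewrite k1 mul1n ltnn.
move=> h1 h2; have : (2 <= k)%N by lia.
move=> k2; exact: leq_mul k2 (leqnn e).
Qed.

Lemma etilde_half d : (0 < d)%N -> (2 * etilde d <= d)%N.
Proof.
move=> d0; have : (etilde d <= d %/ 2)%N.
  apply/bigmax_leqP => e /andP[e1 ed].
  have := half_div d0 ed (ltn_ord e). rewrite leq_divRL //. lia.
rewrite leq_divRL //; lia.
Qed.

Lemma gcd_small n d : (0 < d)%N -> ~~ (d %| n)%N -> (2 * gcdn n d <= d)%N.
Proof.
move=> d0 nd; apply: half_div => //; first exact: dvdn_gcdr.
rewrite -gcdn_modl.
have r0 : (0 < n %% d)%N by rewrite lt0n; move: nd; rewrite /dvdn.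
have := dvdn_leq r0 (dvdn_gcdl (n %% d) d); have := ltn_pmod n d0; lia.
Qed.

Lemma sum_zero n d t : (forall e : 'I_d, (1 < e)%N -> (e %| d)%N -> (e <= t)%N) ->
  (\sum_(e < d | (1 < e)%N && (e %| d)%N) #|Nset n e t|)%N = 0%N.
Proof.
move=> h; apply: big1 => e /andP[e1 ed]; apply: nset0 => s; apply: cond_parity; first lia.
exact: h.
Qed.

Unset Implicit Arguments. Set Strict Implicit.

Theorem lemma11 (n d t : nat) :
  (0 < n)%N -> (0 < d)%N -> (0 < t)%N ->
  (* (i) d composite *)
  (((1 < d)%N /\ ~~ prime d) ->
     ((t < etilde d)%N ->
        ((d %| n)%N -> #|Nset n d t| = 0%N) /\
        (~~ (d %| n)%N ->
           (#|Nset n d t|%:Z =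
              (2 ^ (d - t - 1))%:Z
              - (\sum_(e < d | (1 < e)%N && (e %| d)%N) #|Nset n e t|)%:Z)%R)) /\
     ((etilde d <= t)%N ->
        ((d %| n)%N -> #|Nset n d t| = 0%N) /\
        (~~ (d %| n)%N -> \rank (Amx n d t) != \rank (Bmx n d t) ->
           #|Nset n d t| = 0%N) /\
        (~~ (d %| n)%N -> \rank (Amx n d t) = \rank (Bmx n d t) ->
           #|Nset n d t| = (2 ^ (d - \rank (Amx n d t)))%N))) /\
  (* (ii) d prime *)
  (prime d ->
     ((d %| n)%N -> #|Nset n d t| = 0%N) /\
     (~~ (d %| n)%N -> (d <= t)%N -> #|Nset n d t| = 0%N) /\
     (~~ (d %| n)%N -> (1 <= t <= d - 2)%N -> #|Nset n d t| = (2 ^ (d - t - 1))%N) /\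
     (~~ (d %| n)%N -> t = (d - 1)%N -> #|Nset n d t| = 2%N)).
Proof.
move=> n0 d0 t0.
have Ddiv : (d %| n)%N -> #|Nset n d t| = 0%N.
  by move=> h; apply: nset0 => s; exact: (@cond_dvd n d t s d0 h).
split.
- move=> [d1 np]; split.
  + move=> te; split; first exact: Ddiv.
    move=> nd.
    have hs := @sol_decomp n d t d1 t0.
    have hb : (t.+1 + gcdn n d <= d)%N.
      by have := etilde_half d0; have := gcd_small d0 nd; lia.
    rewrite (@sol_forest n d t n0 t0 hb) in hs.
    move: hs; set X := (2 ^ (d - t - 1))%N; set Y := (\sum_(e < d | _) _)%N; lia.
  + move=> et.
    have Z : (\sum_(e < d | (1 < e)%N && (e %| d)%N) #|Nset n e t|)%N = 0%N.
      apply: sum_zero => e e1 ed.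
      have := @leq_bigmax_cond _ (fun e : 'I_d => (1 < e)%N && (e %| d)%N) (fun e => nat_of_ord e) e.
      rewrite e1 ed => /(_ isT) h; move: et; rewrite /etilde; exact: leq_trans h.
    have hs := @sol_decomp n d t d1 t0; rewrite Z addn0 in hs.
    split; first exact: Ddiv.
    split.
    * move=> nd hr; rewrite -hs (@sol_rank n d t d0 t0 nd) (negbTE hr) //.
    * move=> nd hr; rewrite -hs (@sol_rank n d t d0 t0 nd) hr eqxx //.
- move=> pd; have d1 := prime_gt1 pd.
  have Z : (\sum_(e < d | (1 < e)%N && (e %| d)%N) #|Nset n e t|)%N = 0%N.
    apply: sum_zero => e e1 ed; exfalso.
    move: pd => /primeP[_ /(_ e ed)] /= /orP[] /eqP he; have := ltn_ord e; lia.
  have hs := @sol_decomp n d t d1 t0; rewrite Z addn0 in hs.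
  have g1 : ~~ (d %| n)%N -> gcdn n d = 1%N.
    by move=> nd; apply/eqP; rewrite gcdnC -/(coprime d n) prime_coprime.
  split; first exact: Ddiv.
  split.
    move=> nd dt; apply: nset0 => s; exact: (@cond_parity n d t s d0 dt).
  split.
    move=> nd /andP[_ td]; rewrite -hs; apply: (@sol_forest n d t n0 t0).
    rewrite g1 //; lia.
  move=> nd td; rewrite -hs; apply: (@sol_full n d t n0 d1); [lia | exact: g1].
Qed.
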